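(* Let $n\ge2$, $\boldsymbol{\lambda}=(\lambda_1,\dots,\lambda_n)$ a vector of positive integers, $\ell=\mathrm{lcm}(\lambda_1,\dots,\lambda_{n-1})$, $\boldsymbol{\lambda}'=(\lambda_1,\dots,\lambda_{n-1},\lambda_n+\ell)$, and suppose $\lambda_n\ge\ell$. Let $(a_1,\dots,a_{n-1},a_n',d)$ be a minimal generator of $M(\boldsymbol{\lambda}')$ of type (4), and set $\delta=d\ell-\frac{\ell}{\lambda_1}a_1-\cdots-\frac{\ell}{\lambda_{n-1}}a_{n-1}$. Then $(a_1,\dots,a_{n-1},a_n'-\delta,d)$ is a minimal generator of $M(\boldsymbol{\lambda})$ of type (4).
   Context: For a vector $\boldsymbol{\mu}$ of $n$ positive integers, $M(\boldsymbol{\mu})=\{(a_1,\dots,a_n,d)\in\mathbb{N}^{n+1}\mid a_1/\mu_1+\cdots+a_n/\mu_n\ge d\}$. A minimal generator of $M(\boldsymbol{\mu})$ is a nonzero element that cannot be written as the sum of two nonzero elements of $M(\boldsymbol{\mu})$. A minimal generator $(a_1,\dots,a_n,d)$ is of type (4) if $d>0$ and $a_ia_n>0$ for some $1\le i<n$. (Equivalently, $(a_1,\dots,a_{n-1},a_n'-\delta,d)=f^{-1}(a_1,\dots,a_{n-1},a_n',d)$ for the group automorphism $f(u_1,\dots,u_{n+1})=(u_1,\dots,u_{n-1},u_n+u_{n+1}\ell-\sum_{i<n}\frac{\ell}{\lambda_i}u_i,u_{n+1})$ of $\mathbb{Z}^{n+1}$.) *)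

(* Defs.v *)
From HB Require Import structures.
From mathcomp Require Import all_boot all_order all_algebra.
Set Implicit Arguments. Unset Strict Implicit. Unset Printing Implicit Defensive.
Import Order.TTheory GRing.Theory Num.Theory.

(* Elements of N^{n+1} are pairs (a, d) with a : {ffun 'I_n -> nat}
   (coordinates a_1..a_n, indexed 0..n-1) and d : nat. *)
Definition elt (n : nat) := ({ffun 'I_n -> nat} * nat)%type.

Definition inM (n : nat) (mu : {ffun 'I_n -> nat}) (x : elt n) : Prop :=
  ((x.2)%:R <= \sum_(i < n) ((x.1 i)%:R / (mu i)%:R : rat))%R.

Definition is_zero (n : nat) (x : elt n) : Prop :=
  (forall i, x.1 i = 0) /\ x.2 = 0.

Definition is_sum (n : nat) (x y z : elt n) : Prop :=
  (forall i, x.1 i = y.1 i + z.1 i) /\ x.2 = y.2 + z.2.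

Definition minimal_generator (n : nat) (mu : {ffun 'I_n -> nat}) (x : elt n) : Prop :=
  inM mu x /\ ~ is_zero x /\
  ~ (exists y z : elt n, inM mu y /\ inM mu z /\ ~ is_zero y /\ ~ is_zero z /\ is_sum x y z).

Definition type4 (n : nat) (x : elt n) : Prop :=
  0 < x.2 /\
  exists i j : 'I_n, i < n.-1 /\ (j : nat) = n.-1 /\ 0 < x.1 i * x.1 j.

Definition lcm_init (n : nat) (lam : {ffun 'I_n -> nat}) : nat :=
  \big[lcmn/1]_(i < n | (i < n.-1)%N) lam i.

Definition lam_prime (n : nat) (lam : {ffun 'I_n -> nat}) : {ffun 'I_n -> nat} :=
  [ffun i : 'I_n => if (i : nat) == n.-1 then lam i + lcm_init lam else lam i].

Definition delta (n : nat) (lam : {ffun 'I_n -> nat}) (x : elt n) : int :=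
  ((x.2 * lcm_init lam)%:Z - (\sum_(i < n | (i < n.-1)%N) (lcm_init lam %/ lam i) * x.1 i)%:Z)%R.

(* Main.v *)
Require Import Defs.
From HB Require Import structures.
From mathcomp Require Import all_boot all_order all_algebra.
From mathcomp Require Import zify ring lra.
Import Order.TTheory GRing.Theory Num.Theory.
Set Implicit Arguments. Unset Strict Implicit.

Section H.
Variables (n : nat) (lam : {ffun 'I_n -> nat}).
Hypothesis hpos : forall i, 0 < lam i.

Definition PP (a : {ffun 'I_n -> nat}) : nat :=
  \sum_(i < n | (i < n.-1)%N) (lcm_init lam %/ lam i) * a i.

Lemma L_gt0 : 0 < lcm_init lam.
Proof.
rewrite /lcm_init; apply: (big_ind (fun m => 0 < m)) => //.
by move=> a b ha hb; rewrite lcmn_gt0 ha hb.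
Qed.

Lemma dvd_L (i : 'I_n) : i < n.-1 -> lam i %| lcm_init lam.
Proof. by move=> hi; apply: (biglcmn_sup i). Qed.

Lemma neq_last (j i : 'I_n) : (j : nat) = n.-1 -> (i != j) = (i < n.-1).
Proof. move=> hj; have := ltn_ord i; rewrite -val_eqE /= hj; lia. Qed.

Lemma inM_iff (mu : {ffun 'I_n -> nat}) (j : 'I_n) (u : elt n) :
  (j : nat) = n.-1 -> (forall i : 'I_n, i < n.-1 -> mu i = lam i) -> 0 < mu j ->
  inM mu u <-> (u.2 * lcm_init lam * mu j <= PP u.1 * mu j + u.1 j * lcm_init lam)%N.
Proof.
move=> hj hmu hmj.
have hL := L_gt0.
rewrite /inM (bigD1 j) //=.
have -> : ((\sum_(i < n | i != j) ((u.1 i)%:R / (mu i)%:R : rat))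
   = (PP u.1)%:R / (lcm_init lam)%:R)%R.
  rewrite /PP natr_sum mulr_suml.
  apply: eq_big => [i|i hi].
    by rewrite (neq_last i hj).
  have hi' : i < n.-1 by rewrite -(neq_last i hj).
  rewrite hmu // natrM.
  have hl := hpos i.
  have E : ((lcm_init lam)%:R = ((lcm_init lam %/ lam i)%:R * (lam i)%:R : rat))%R.
    by rewrite -natrM divnK // dvd_L.
  rewrite E; field.
  apply/andP; split; rewrite pnatr_eq0 -lt0n //.
  by rewrite divn_gt0 // dvdn_leq // dvd_L.
set L := lcm_init lam.
rewrite -(ler_pM2r (_ : (0:rat) < (L * mu j)%:R)%R); last by rewrite ltr0n muln_gt0 hL.
have hL' : (L%:R : rat) != 0%R by rewrite pnatr_eq0 -lt0n.
have hm' : ((mu j)%:R : rat) != 0%R by rewrite pnatr_eq0 -lt0n.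
have -> : ((((u.1 j)%:R / (mu j)%:R + (PP u.1)%:R / L%:R) * (L * mu j)%:R : rat)
   = (PP u.1 * mu j + u.1 j * L)%:R)%R.
  rewrite !natrD !natrM; field; by rewrite hL' hm'.
rewrite -natrM ler_nat mulnA.
by split => /idP.
Qed.
End H.

Lemma PP_eq n (lam : {ffun 'I_n -> nat}) (a a' : {ffun 'I_n -> nat}) :
  (forall i : 'I_n, i < n.-1 -> a i = a' i) -> PP lam a = PP lam a'.
Proof. by move=> h; apply: eq_bigr => i hi; rewrite h. Qed.

Lemma PP_add n (lam : {ffun 'I_n -> nat}) (a a1 a2 : {ffun 'I_n -> nat}) :
  (forall i : 'I_n, i < n.-1 -> a i = a1 i + a2 i) -> PP lam a = PP lam a1 + PP lam a2.
Proof. by move=> h; rewrite /PP -big_split; apply: eq_bigr => i hi; rewrite h // mulnDr. Qed.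

Lemma arith_contra (L m e bn Pz Py dy dz zn : nat) :
  0 < L -> L <= m -> bn * L < e * m + L ->
  dy * L < Py -> (dy + dz) * L = Py + Pz + e ->
  dz * L * m <= Pz * m + zn * L -> zn <= bn -> False.
Proof. move=> *; nia. Qed.


Theorem proposition5p7 (n : nat) (hn : 2 <= n) (lam : {ffun 'I_n -> nat})
  (hpos : forall i, 0 < lam i)
  (hbig : forall j : 'I_n, (j : nat) = n.-1 -> lcm_init lam <= lam j)
  (x : elt n)
  (hgen : minimal_generator (lam_prime lam) x) (h4 : type4 x) :
  exists b : {ffun 'I_n -> nat},
    (forall i : 'I_n, i < n.-1 -> b i = x.1 i) /\
    (forall i : 'I_n, (i : nat) = n.-1 -> ((b i)%:Z = (x.1 i)%:Z - delta lam x)%R) /\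
    minimal_generator lam (b, x.2) /\ type4 (b, x.2).
Proof.
case: h4 => hD [i0 [j [hi0 [hj hprod]]]].
have hLm := hbig j hj.
set L := lcm_init lam in hLm.
have hL : 0 < L := L_gt0 hpos.
set m := lam j in hLm.
have hm : 0 < m := hpos j.
have hlpj : lam_prime lam j = m + L by rewrite ffunE hj eqxx.
have hlpi : forall i : 'I_n, i < n.-1 -> lam_prime lam i = lam i.
  by move=> i hi; rewrite ffunE; case: eqP => // e; move: hi; rewrite e ltnn.
have inMp := fun u => inM_iff hpos u hj hlpi (ltac:(rewrite hlpj; lia) : 0 < lam_prime lam j).
have inMl := fun u => inM_iff hpos u hj (fun i _ => erefl (lam i)) hm.
rewrite hlpj in inMp.
rewrite -/L -/m in inMp inMl.
have neqj : forall i : 'I_n, (i != j) = (i < n.-1) := fun i => neq_last i hj.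
case: hgen => hxM [hxnz hxmin].
have hA : 0 < x.1 j by move: hprod; rewrite muln_gt0 => /andP[].
have hA0 : 0 < x.1 i0 by move: hprod; rewrite muln_gt0 => /andP[].
set A := x.1 j in hA hprod.
set D := x.2 in hD.
set P := PP lam x.1.
(* x - e_j not in M *)
have hnx : ~ (D * L * (m + L) <= P * (m + L) + A.-1 * L).
  move=> H; apply: hxmin.
  exists ([ffun i => if i == j then A.-1 else x.1 i], D).
  exists ([ffun i => if i == j then 1 else 0], 0).
  split.
    apply/inMp => /=.
    rewrite ffunE eqxx (@PP_eq _ _ _ x.1) // => i hi.
    by rewrite ?ffunE ifN // neqj.
  split; first by apply/inMp => /=; rewrite mul0n.
  split; first by case=> _ /= h; rewrite h in hD.
  split; first by case=> /(_ j) /=; rewrite ffunE eqxx.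
  split => [i|]; last by rewrite /= addn0.
  rewrite /= ?ffunE; case: ifP => [/eqP ->|_]; last by rewrite addn0.
  by rewrite addn1 prednK.
have hx := (iffLR (inMp x) hxM).
rewrite -/D -/P -/A -/L in hx.
have hPK : P < D * L.
  rewrite ltnNge; apply/negP => hle; apply: hnx.
  exact: leq_trans (leq_mul hle (leqnn _)) (leq_addr _ _).
have [e he] : exists e, D * L = P + e by exists (D * L - P); lia.
have he0 : 0 < e by lia.
have heA : e <= A by nia.
have [bn hbn] : exists bn, A = bn + e by exists (A - e); lia.
have F1 : e * m <= bn * L by rewrite he hbn in hx; nia.
have F2 : bn * L < e * m + L.
  have : ~ (P + e) * (m + L) <= P * (m + L) + (bn + e).-1 * L by rewrite -he -hbn.
  rewrite -subn1; nia.
have hbn0 : 0 < bn by nia.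
exists [ffun i => if i == j then bn else x.1 i].
split.
  by move=> i hi; rewrite ?ffunE ifN // neqj.
split.
  move=> i hi; have -> : i = j by apply: val_inj; rewrite /= hi hj.
  rewrite ffunE eqxx /delta -/L -/D.
  have -> : (\sum_(i < n | i < n.-1) lcm_init lam %/ lam i * x.1 i) = P by [].
  rewrite -/A he hbn; lia.
have hPb : PP lam [ffun i => if i == j then bn else x.1 i] = P.
  by apply: PP_eq => i hi; rewrite ?ffunE ifN // neqj.
split; last first.
  split => //; exists i0, j; split => //; split => //=.
  rewrite !ffunE eqxx; have -> : (i0 == j) = false by apply/negbTE; rewrite neqj.
  by rewrite muln_gt0 hA0 hbn0.
split.
  apply/inMl => /=; rewrite hPb ffunE eqxx -/D -/m.
  rewrite he in hx *; rewrite hbn in hx; nia.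
split; first by case=> _ /= h; move: hD; rewrite /D h.
move=> [y [z [hy [hz [hynz [hznz [hs1 hs2]]]]]]].
move: hs2 hs1 => /= hs2 hs1.
have hsum : P = PP lam y.1 + PP lam z.1.
  rewrite -hPb; apply: PP_add => i hi; rewrite -hs1 //.
have hbj : bn = y.1 j + z.1 j by rewrite -hs1 ffunE eqxx.
move/inMl: hy; move/inMl: hz; rewrite -/L -/m => hz hy.
set Py := PP lam y.1 in hy hsum; set Pz := PP lam z.1 in hz hsum.
case: (leqP Py (y.2 * L)) => hey; last first.
  have hcl : (y.2 + z.2) * L = Py + Pz + e by rewrite -hs2 he hsum.
  have zle : z.1 j <= bn by lia.
  exact: (arith_contra hL hLm F2 hey hcl hz zle).
case: (leqP Pz (z.2 * L)) => hez; last first.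
  have hcl : (z.2 + y.2) * L = Pz + Py + e by rewrite addnC -hs2 he hsum (addnC Py).
  have yle : y.1 j <= bn by lia.
  exact: (arith_contra hL hLm F2 hez hcl hy yle).
apply: hxmin.
exists ([ffun i => if i == j then y.1 j + (y.2 * L - Py) else y.1 i], y.2).
exists ([ffun i => if i == j then z.1 j + (z.2 * L - Pz) else z.1 i], z.2).
have PY : PP lam [ffun i => if i == j then y.1 j + (y.2 * L - Py) else y.1 i] = Py.
  by apply: PP_eq => i hi; rewrite ?ffunE ifN // neqj.
have PZ : PP lam [ffun i => if i == j then z.1 j + (z.2 * L - Pz) else z.1 i] = Pz.
  by apply: PP_eq => i hi; rewrite ?ffunE ifN // neqj.
split.
  apply/inMp => /=; rewrite PY ffunE eqxx.
  have [ey hey'] : exists ey, y.2 * L = Py + ey by exists (y.2 * L - Py); lia.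
  rewrite hey' in hy *; rewrite addKn; nia.
split.
  apply/inMp => /=; rewrite PZ ffunE eqxx.
  have [ez hez'] : exists ez, z.2 * L = Pz + ez by exists (z.2 * L - Pz); lia.
  rewrite hez' in hz *; rewrite addKn; nia.
have nz : forall w : elt n, ~ is_zero w ->
   ~ is_zero ([ffun i => if i == j then w.1 j + (w.2 * L - PP lam w.1) else w.1 i], w.2).
  move=> w hw [/= h1 h2]; apply: hw; split => // i.
  have := h1 i; rewrite ffunE; case: ifP => [/eqP ->|//].
  by rewrite h2 mul0n sub0n addn0.
split; first exact: (nz y hynz).
split; first exact: (nz z hznz).
split => //= i; rewrite ?ffunE; case: ifP => [/eqP ->|hij].
  rewrite -/A hbn hbj.
  have : y.2 * L + z.2 * L = Py + Pz + e by rewrite -mulnDl -hs2 he hsum.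
  lia.
by rewrite -hs1 ffunE hij.
Qed.
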